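(* Let $d\geq 1$, let $Q\subset\mathbb{Z}_+^d$ be a lower set with $|Q|=n$, and let $k$ be a positive integer. Then the number $C(Q,k,d)$ of lower sets $Q'\subset Q$ with $|Q'|\geq n-k$ satisfies $$C(Q,k,d)<\Big(\max\Big\{8,\frac{4eT(n)}{k}\Big\}\Big)^k.$$
   Context: $\mathbb{Z}_+=\{0,1,2,\dots\}$. A set $Q\subset\mathbb{Z}_+^d$ is a lower set if whenever $q\in Q$ and $q'\in\mathbb{Z}_+^d$ satisfies $q'_i\leq q_i$ for all $i$, then $q'\in Q$. For $q,q'\in\mathbb{Z}_+^d$ write $q\succ q'$ if $q_i\geq q'_i$ for all $i$. For a lower set $Q$, $M(Q)$ denotes the set of all $q'\in Q$ such that no $q\in Q\setminus\{q'\}$ satisfies $q\succ q'$ (the maximal available subset of $Q$). $T(n):=\max\{|M(Q)|: Q\subset\mathbb{Z}_+^d \text{ a lower set},\ |Q|=n\}$. *)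

(* Defs.v *)
From Stdlib Require Import Reals ClassicalDescription.
From mathcomp Require Import all_boot finmap.
Set Implicit Arguments. Unset Strict Implicit. Unset Printing Implicit Defensive.
Local Open Scope fset_scope.

Definition point (d : nat) := {ffun 'I_d -> nat}.

Definition succeq d (q q' : point d) : bool := [forall i, q' i <= q i].

Definition lower d (Q : {fset point d}) : Prop :=
  forall q q' : point d, q \in Q -> (forall i, q' i <= q i) -> q' \in Q.

Definition asb (P : Prop) : bool := if excluded_middle_informative P then true else false.

Definition Mset d (Q : {fset point d}) : {fset point d} :=
  [fset q' in Q | ~~ has (fun q => (q != q') && succeq q q') (enum_fset Q)].

Definition is_T d (n t : nat) : Prop :=
  (exists Q : {fset point d}, lower Q /\ #|` Q| = n /\ #|` Mset Q| = t) /\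
  (forall Q : {fset point d}, lower Q -> #|` Q| = n -> #|` Mset Q| <= t).

Definition Ccount d (Q : {fset point d}) (k : nat) : nat :=
  #|` [fset Q' in fpowerset Q | asb (lower Q') && (#|` Q| - k <= #|` Q'|)] |.

(* Main.v *)
Require Import Defs.
From Stdlib Require Import Reals.
From mathcomp Require Import all_boot finmap.
From Stdlib Require Import Lra ClassicalDescription.
From mathcomp Require Import zify.

Module Helpers.
Set Implicit Arguments. Unset Strict Implicit. Unset Printing Implicit Defensive.
Local Open Scope fset_scope.
Lemma ffact_le_exp n m : (n ^_ m <= n ^ m)%N.
Proof.
elim: m n => [|m IH] n; first by [].
rewrite ffactnS expnS leq_mul2l; apply/orP; right.
apply: leq_trans (IH n.-1) _; case: m {IH} => [|m]; first by rewrite !expn0.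
rewrite leq_exp2r //; exact: leq_pred.
Qed.

Lemma bin_fact_le n m : ('C(n, m) * m`! <= n ^ m)%N.
Proof. by rewrite bin_ffact ffact_le_exp. Qed.

Section S.
Variable d : nat.
Implicit Types (P Q B : {fset point d}) (p q x z : point d).

Lemma succeqP p q : reflect (forall i, q i <= p i)%N (succeq p q).
Proof. exact: forallP. Qed.

Lemma inMP P q : q \in Mset P <-> q \in P /\ (forall p, p \in P -> p != q -> ~~ succeq p q).
Proof.
rewrite /Mset !inE /=; split.
  case/andP=> hq hn; split => // p hp hpq; apply/negP => hs.
  move/negP: hn; apply; apply/hasP; exists p; first by [].
  by rewrite hpq hs.
case=> hq H; rewrite hq /=; apply/hasPn => p hp; rewrite negb_and.
case: eqP => //= /eqP hpq; exact: H.
Qed.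

Lemma asbP (A : Prop) : asb A <-> A.
Proof. rewrite /asb; case: excluded_middle_informative => //. Qed.

Lemma pt_anti p q : (forall i, p i <= q i)%N -> (forall i, q i <= p i)%N -> p = q.
Proof. move=> h1 h2; apply/ffunP => i; apply/eqP; by rewrite eqn_leq h1 h2. Qed.

Lemma notM P q : q \in P -> q \notin Mset P ->
  exists p, [/\ p \in P, p != q & forall i, (q i <= p i)%N].
Proof.
move=> hq; rewrite /Mset !inE /= hq /= negbK => /hasP [p hp /andP [hpq /succeqP hs]].
by exists p.
Qed.

Lemma exists_max P q : q \in P -> exists p, p \in Mset P /\ forall i, (q i <= p i)%N.
Proof.
move=> hq.
suff H : forall n q, q \in P -> (#|` [fset p in P | succeq p q]| <= n)%N ->
   exists p, p \in Mset P /\ forall i, (q i <= p i)%N by exact: H.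
clear hq q; elim=> [|n IH] q hq hn.
  have : q \in [fset p in P | succeq p q] by rewrite !inE hq /=; apply/succeqP.
  move=> hin; move: hn; rewrite leqn0 cardfs_eq0 => /eqP he.
  by move: hin; rewrite he inE.
case hM : (q \in Mset P); first by exists q.
have [p [hp hpq hs]] := notM hq (negbT hM).
have [p' [hp' hle]] : exists p', p' \in Mset P /\ forall i, (p i <= p' i)%N.
  apply: IH => //.
  have hsub : [fset p0 in P | succeq p0 p] `<=` [fset p0 in P | succeq p0 q] `\ q.
    apply/fsubsetP => z; rewrite !inE /= => /andP [hz /succeqP hzp].
    rewrite hz /=; apply/andP; split.
      apply/eqP => ezq; move/eqP: hpq; apply.
      by apply: pt_anti => i; [rewrite -ezq|].
    by apply/succeqP => i; apply: leq_trans (hs i) (hzp i).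
  have := fsubset_leq_card hsub.
  have := cardfsD1 q [fset p0 in P | succeq p0 q].
  have -> : q \in [fset p0 in P | succeq p0 q] by rewrite !inE hq /=; apply/succeqP.
  move=> e; rewrite e in hn; move=> h; apply: leq_trans h _; by rewrite -ltnS.
exists p'; split => // i; exact: leq_trans (hs i) (hle i).
Qed.

Lemma M_sub P : Mset P `<=` P.
Proof. apply/fsubsetP => z /inMP []; done. Qed.

Lemma M_remove P x z : z \in Mset P -> z != x -> z \in Mset (P `\ x).
Proof.
move=> /inMP [hz H] hzx; apply/inMP; split; first by rewrite !inE hzx.
move=> p; rewrite !inE => /andP [_ hp]; exact: H.
Qed.

Lemma lower_remove P x : lower P -> x \in Mset P -> lower (P `\ x).
Proof.
move=> hl /inMP [hx H] q q'; rewrite !inE => /andP [hqx hq] hle.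
rewrite (hl q q' hq hle) andbT; apply/eqP => e; subst q'.
by move: (H q hq hqx) => /succeqP; apply.
Qed.

Lemma lower_full P Q' : lower Q' -> Q' `<=` P -> Mset P `<=` Q' -> P = Q'.
Proof.
move=> hl hs hm; apply/eqP; rewrite eqEfcard; apply/andP; split; last first.
  by apply: fsubset_leq_card.
apply/fsubsetP => q hq; have [p [hp hle]] := exists_max hq.
apply: (hl p) => //; exact: (fsubsetP hm).
Qed.

Definition Sset P B j := [fset Q' in fpowerset P |
  asb (lower Q') && (#|` P| <= #|` Q'| + j)%N && (Mset P `\` B `<=` Q')].

Lemma inS P B j Q' : Q' \in Sset P B j <->
  [/\ Q' `<=` P, lower Q', (#|` P| <= #|` Q'| + j)%N & Mset P `\` B `<=` Q'].
Proof.
rewrite /Sset !inE /= fpowersetE; split.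
  by case/andP=> hs /andP [/andP [/asbP hl hc] hm].
case=> hs hl hc hm; rewrite hs hc hm /= !andbT; by apply/asbP.
Qed.

Lemma S_single P B j : (forall Q', Q' \in Sset P B j -> Q' = P) -> (#|` Sset P B j| <= 1)%N.
Proof.
move=> H; rewrite -(cardfs1 P); apply: fsubset_leq_card; apply/fsubsetP => z hz.
by rewrite inE (H z hz).
Qed.

Lemma count_main (T : nat) (Q : {fset point d})
  (HT : forall P, lower P -> P `<=` Q -> (#|` Mset P| <= T)%N) :
  forall j b P B, lower P -> P `<=` Q -> B `<=` Mset P -> #|` B| = b ->
  (#|` Sset P B j| <= 'C(b + (T - #|` Mset P|) + j, j))%N.
Proof.
elim=> [|j IHj].
  move=> b P B _ _ _ _; rewrite bin0; apply: S_single => Q' /inS [hs _ hc _].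
  apply/eqP; rewrite eqEfcard hs /=; by rewrite addn0 in hc.
elim=> [|b IHb] P B hl hPQ hB hb.
  have B0 : B = fset0 by apply: cardfs0_eq.
  apply: leq_trans (_ : 1 <= _)%N; last by rewrite bin_gt0 leq_addl.
  apply: S_single => Q' /inS [hs hl' _ hm].
  symmetry; apply: lower_full => //; by rewrite B0 fsetD0 in hm.
case: (fset_0Vmem B) => [B0|[x hx]]; first by rewrite B0 cardfs0 in hb.
have hxM : x \in Mset P by apply: (fsubsetP hB).
have hxP : x \in P by apply: (fsubsetP (M_sub P)).
set B' := Mset (P `\ x) `\` (Mset P `\` B).
have hsub : Sset P B j.+1 `<=` Sset P (B `\ x) j.+1 `|` Sset (P `\ x) B' j.
  apply/fsubsetP => Q' /inS [hs hl' hc hm]; rewrite inE; apply/orP.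
  case hxQ : (x \in Q').
    left; apply/inS; split => //; apply/fsubsetP => z; rewrite !inE.
    case/andP=> hz hzM; case: (eqVneq z x) => [->//|hzx].
    apply: (fsubsetP hm); rewrite !inE hzM andbT.
    by move: hz; rewrite hzx.
  right; apply/inS; split => //.
  - apply/fsubsetP => z hz; rewrite !inE (fsubsetP hs z hz) andbT.
    by apply/eqP => e; rewrite e hxQ in hz.
  - move: hc; rewrite (cardfsD1 x P) hxP addnS ltnS => //.
  - apply/fsubsetP => z.
    rewrite in_fsetD => /andP [hz hzM].
    rewrite /B' in_fsetD hzM andbT negbK in hz; exact: (fsubsetP hm).
apply: leq_trans (fsubset_leq_card hsub) _.
rewrite cardfsU; apply: leq_trans (leq_subr _ _) _.
rewrite !addSn binS; apply: leq_add.
  apply: IHb => //.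
    apply/fsubsetP => z; rewrite inE => /andP [_ hz]; exact: (fsubsetP hB).
  by move: hb; rewrite (cardfsD1 x B) hx add1n => -[].
have hlx := lower_remove hl hxM.
have hPQx : P `\ x `<=` Q by apply: fsubset_trans hPQ; apply: fsubsetDl.
apply: leq_trans (IHj _ _ _ hlx hPQx (fsubsetDl _ _) erefl) _.
apply: leq_bin2l.
have hMB : Mset P `\` B `<=` Mset (P `\ x).
  apply/fsubsetP => z; rewrite inE => /andP [hzB hz]; apply: M_remove => //.
  by apply/eqP => e; rewrite e hx in hzB.
have e1 : #|` B'| = (#|` Mset (P `\ x)| - #|` Mset P `\` B|)%N by rewrite /B' cardfsDS.
have e2 : #|` Mset P `\` B| = (#|` Mset P| - #|` B|)%N by rewrite cardfsDS.
have h1 := fsubset_leq_card hMB.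
have h2 := fsubset_leq_card hB.
have h3 := HT _ hlx hPQx.
have h4 := HT _ hl hPQ.
rewrite e1; rewrite e2 hb in h1 *; rewrite hb in h2.
lia.
Qed.

Section Ext.
Variable i0 : 'I_d.
Definition ee (c : nat) : point d := [ffun i => if i == i0 then c else 0%N].

Lemma ee_i0 c : ee c i0 = c.
Proof. by rewrite ffunE eqxx. Qed.

Lemma le_ee q c : (forall i, q i <= ee c i)%N -> q = ee (q i0) /\ (q i0 <= c)%N.
Proof.
move=> h; split; last by have := h i0; rewrite ee_i0.
apply/ffunP => i; rewrite ffunE; case: eqP => [->//|/eqP hi].
by have := h i; rewrite ffunE (negbTE hi) leqn0 => /eqP.
Qed.

Lemma le_ee2 c c' : (c <= c')%N -> forall i, (ee c i <= ee c' i)%N.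
Proof. by move=> h i; rewrite !ffunE; case: eqP. Qed.

Lemma exists_big (s : seq (point d)) : exists c, forall p, p \in s -> (p i0 < c)%N.
Proof.
elim: s => [|a s [c hc]]; first by exists 0%N.
exists (maxn (a i0).+1 c) => p; rewrite inE => /orP [/eqP ->|hp].
  by rewrite leq_max leqnn.
by rewrite leq_max (hc p hp) orbT.
Qed.

Lemma ext_step P : lower P -> exists P2, [/\ lower P2, #|` P2| = #|` P|.+1 &
  (#|` Mset P| <= #|` Mset P2|)%N].
Proof.
move=> hl.
have hex : exists c, ee c \notin P.
  have [c0 hc0] := exists_big (enum_fset P).
  exists c0; apply/negP => h; have := hc0 _ h; by rewrite ee_i0 ltnn.
case: (ex_minnP hex) => c hc hmin.
have inP : forall c', (c' < c)%N -> ee c' \in P.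
  move=> c' hc'; apply/negPn/negP => h; have := hmin c' h; by rewrite leqNgt hc'.
set x := ee c.
have hx : x \notin P by [].
exists (x |` P); split.
- move=> q q'; rewrite in_fset1U => /orP [/eqP ->|hq] hle; last first.
    by rewrite in_fset1U (hl q q' hq hle) orbT.
  have [e1 e2] := le_ee hle; rewrite in_fset1U; apply/orP.
  move: e2; rewrite leq_eqVlt => /orP [/eqP e3|e3].
    by left; rewrite e1 e3.
  by right; rewrite e1; apply: inP.
- by rewrite cardfsU1 hx.
have hxM : x \in Mset (x |` P).
  apply/inMP; split; first by rewrite in_fset1U eqxx.
  move=> p; rewrite in_fset1U => /orP [/eqP ->|hp]; first by rewrite eqxx.
  move=> _; apply/negP => /succeqP hs; move/negP: hx; apply; exact: (hl p).
set y0 := ee c.-1.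
have hsub : Mset P `<=` (Mset (x |` P) `\ x) `|` [fset y0].
  apply/fsubsetP => z hz; rewrite in_fsetU in_fset1 in_fsetD1.
  case: (eqVneq z y0) => [->|hzy]; first by rewrite orbT.
  have [hzP hzM] := (inMP P z).1 hz.
  rewrite orbF; apply/andP; split.
    by apply/eqP => e; move: hzP; rewrite e (negbTE hx).
  apply/inMP; split; first by rewrite in_fset1U hzP orbT.
  move=> p; rewrite in_fset1U => /orP [/eqP ->|hp]; last exact: hzM.
  move=> hxz; apply/negP => /succeqP hs.
  have [e1 e2] := le_ee hs.
  move: e2; rewrite leq_eqVlt => /orP [/eqP e3|e3].
    by move: hzP; rewrite e1 e3 (negbTE hx).
  have hc1 : (z i0 < c.-1)%N.
    rewrite ltn_neqAle; apply/andP; split; last by rewrite -ltnS (ltn_predK e3).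
    by apply/eqP => e4; move/eqP: hzy; apply; rewrite e1 e4.
  have hy0 : y0 \in P by apply: inP; rewrite /y0; move: e3; case: (c) => //.
  have hyz : y0 != z.
    by apply/eqP => e4; move: hc1; rewrite -e4 /y0 ee_i0 ltnn.
  move/negP: (hzM y0 hy0 hyz); apply; apply/succeqP => i.
  rewrite e1; apply: le_ee2; exact: ltnW.
apply: leq_trans (fsubset_leq_card hsub) _.
rewrite cardfsU cardfs1; apply: leq_trans (leq_subr _ _) _.
by rewrite (cardfsD1 x (Mset (x |` P))) hxM addnC.
Qed.

Lemma ext_all n : forall r P, lower P -> (#|` P| + r = n)%N ->
  exists P2, [/\ lower P2, #|` P2| = n & (#|` Mset P| <= #|` Mset P2|)%N].
Proof.
elim=> [|r IH] P hl hn; first by exists P; rewrite -hn addn0.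
have [P1 [hl1 hc1 hm1]] := ext_step hl.
have [P2 [hl2 hc2 hm2]] := IH P1 hl1 (etrans (congr1 (addn^~ r) hc1) (etrans (addSnnS _ _) hn)).
exists P2; split => //; exact: leq_trans hm1 hm2.
Qed.
End Ext.
End S.
End Helpers.

Module RHelpers.
Local Open Scope R_scope.
Lemma pow_exp n x : exp x ^ n = exp (INR n * x).
Proof.
elim: n => [|n IH]; first by rewrite /= Rmult_0_l exp_0.
rewrite S_INR /= IH -exp_plus; f_equal; ring.
Qed.

Lemma INR_expn a b : INR (a ^ b)%N = INR a ^ b.
Proof. elim: b => [|b IH]; first by []. by rewrite expnS mult_INR IH /=. Qed.

Lemma step_ineq k : INR k.+2 ^ k.+1 <= exp 1 * INR k.+1 ^ k.+1.
Proof.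
have hk : 0 < INR k.+1 by apply: lt_0_INR; apply/ltP.
have e1 : INR k.+2 = INR k.+1 * (1 + / INR k.+1).
  rewrite (S_INR k.+1); field; lra.
rewrite e1 Rpow_mult_distr (Rmult_comm (exp 1)); apply: Rmult_le_compat_l.
  by apply: pow_le; lra.
have -> : exp 1 = exp (/ INR k.+1) ^ k.+1.
  rewrite pow_exp; f_equal; field; lra.
apply: pow_incr; split.
  have : 0 < / INR k.+1 by apply: Rinv_0_lt_compat.
  lra.
have := exp_ineq1 (/ INR k.+1); have : / INR k.+1 <> 0 by apply: Rinv_neq_0_compat; lra.
  move=> h h2; have := h2 h; lra.
Qed.

Lemma kk_le k : INR k.+1 ^ k.+1 <= exp 1 ^ k * INR (k.+1)`!.
Proof.
elim: k => [|k IH]; first by rewrite /= ; lra.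
rewrite factS mult_INR.
have -> : INR k.+2 ^ k.+2 = INR k.+2 * INR k.+2 ^ k.+1 by [].
have h2 := step_ineq k.
have hp : 0 <= INR k.+2 by apply: pos_INR.
have he : 0 < exp 1 by apply: exp_pos.
have := Rmult_le_compat_l _ _ _ hp h2.
have := Rmult_le_compat_l _ _ _ (Rlt_le _ _ he) IH.
move=> hB hA.
apply: (Rle_trans _ _ _ hA).
have := Rmult_le_compat_l _ _ _ hp hB.
move=> h; apply: (Rle_trans _ _ _ h); right; simpl; ring.
Qed.

Lemma final_real (C Cb t k : nat) : (0 < k)%N -> (C <= Cb)%N ->
  (Cb * k`! <= (t + k) ^ k)%N ->
  INR C < Rmax 8 (4 * exp 1 * INR t / INR k) ^ k.
Proof.
case: k => [//|k] _ hC hb.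
set K := INR k.+1. set Tt := INR t.
have hK : 0 < K by apply: lt_0_INR; apply/ltP.
have hT : 0 <= Tt by apply: pos_INR.
have he : 0 < exp 1 by apply: exp_pos.
have he1 : 1 < exp 1 by have := exp_ineq1 1; lra.
have he3 : exp 1 <= 3 by apply: exp_le_3.
set X := exp 1 * (Tt + K) * / K.
have hX : X <= Rmax 8 (4 * exp 1 * Tt / K).
  rewrite /X; case: (Rle_or_lt K (3 * Tt)) => h.
    apply: Rle_trans (Rmax_r _ _); rewrite /Rdiv.
    apply: Rmult_le_compat_r; first by left; apply: Rinv_0_lt_compat.
    nra.
  apply: Rle_trans (Rmax_l _ _).
  apply: (Rmult_le_reg_r K) => //.
  rewrite Rmult_assoc Rinv_l; last by lra.
  nra.
have hX0 : 0 <= X.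
  rewrite /X; apply: Rmult_le_pos; first by nra.
  by left; apply: Rinv_0_lt_compat.
apply: Rlt_le_trans (pow_incr _ _ _ (conj hX0 hX)).
have hkk := kk_le k.
have hf : 0 < INR (k.+1)`! by apply: lt_0_INR; apply/ltP; apply: fact_gt0.
have hb' : INR Cb * INR (k.+1)`! <= (Tt + K) ^ k.+1.
  rewrite -mult_INR /Tt /K -plus_INR -INR_expn; apply: le_INR; apply/leP; exact: hb.
have hC' : INR C <= INR Cb by apply: le_INR; apply/leP.
have hKk : 0 < K ^ k.+1 by apply: pow_lt.
have hek : 0 < exp 1 ^ k by apply: pow_lt.
have hXk : X ^ k.+1 = exp 1 ^ k.+1 * (Tt + K) ^ k.+1 * / K ^ k.+1.
  rewrite /X !Rpow_mult_distr pow_inv; try lra; by [].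
rewrite hXk.
apply: (Rmult_lt_reg_r (K ^ k.+1)) => //.
rewrite Rmult_assoc Rinv_l; last by lra.
rewrite Rmult_1_r.
have hC0 : 0 <= INR C by apply: pos_INR.
case: (Req_dec (INR C) 0) => hz.
  rewrite hz Rmult_0_l; apply: Rmult_lt_0_compat; first by apply: pow_lt.
  apply: pow_lt; lra.
have hCp : 0 < INR C by lra.
have h1 : INR C * K ^ k.+1 <= INR C * (exp 1 ^ k * INR (k.+1)`!).
  by apply: Rmult_le_compat_l.
apply: Rle_lt_trans h1 _.
have -> : exp 1 ^ k.+1 = exp 1 * exp 1 ^ k by [].
have h2 : INR C * INR (k.+1)`! <= (Tt + K) ^ k.+1.
  apply: Rle_trans hb'; apply: Rmult_le_compat_r; lra.
have h3 : 0 < (Tt + K) ^ k.+1 by apply: pow_lt; lra.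
have h4 := Rmult_le_compat_l _ _ _ (Rlt_le _ _ hek) h2.
have h5 : exp 1 ^ k * (Tt + K) ^ k.+1 < exp 1 * exp 1 ^ k * (Tt + K) ^ k.+1.
  have h6 : 0 < exp 1 ^ k * (Tt + K) ^ k.+1 by apply: Rmult_lt_0_compat.
  nra.
apply: Rle_lt_trans h5; apply: Rle_trans h4; right; ring.
Qed.
End RHelpers.
Import Helpers RHelpers.
Unset Implicit Arguments.

Local Open Scope fset_scope.
Local Open Scope R_scope.

Theorem lemma2 (d : nat) (Q : {fset point d}) (n k t : nat) :
  (1 <= d)%N -> lower Q -> #|` Q|%N = n -> (0 < k)%N -> is_T d n t ->
  INR (Ccount Q k) < Rmax 8 (4 * exp 1 * INR t / INR k) ^ k.
Proof.
move=> hd hl hn hk [_ hT].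
pose i0 : 'I_d := Ordinal hd.
have HT : forall P, lower P -> P `<=` Q -> (#|` Mset P| <= t)%N.
  move=> P hP hPQ.
  have hle := fsubset_leq_card hPQ.
  have [P2 [hl2 hc2 hm2]] := @ext_all d i0 n (n - #|` P|)%N P hP (ltac:(lia) : (#|` P| + (n - #|` P|))%N = n).
  exact: leq_trans hm2 (hT P2 hl2 hc2).
have hc := count_main HT k (Q := Q) hl (fsubset_refl Q) (fsubset_refl _) erefl.
have hMt := HT Q hl (fsubset_refl Q).
have hC : (Ccount Q k <= 'C(t + k, k))%N.
  apply: leq_trans _ (leq_trans hc _); last first.
    apply: leq_bin2l; lia.
  apply: fsubset_leq_card; apply/fsubsetP => Q'.
  move=> hQ; rewrite /Ccount !inE /= fpowersetE in hQ; case/andP: hQ => hs /andP [/asbP hl' hc'].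
  apply/inS; split => //; first by rewrite addnC -leq_subLR.
  by apply/fsubsetP => z; rewrite in_fsetD; case/andP => /negP h1 h2; case: h1.
exact: final_real hk hC (bin_fact_le _ _).
Qed.
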